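(* Let $L$ be a multisorted algebra in the positive existential signature satisfying axioms (1), (2), (7), (9). Let $F$ be a prime filter on sort $n$ of $L$ and let $r$ be an element of sort $n+1$ with $\exists(r)\in F$. Then there is a prime filter $G$ on sort $n+1$ such that $r\in G$ and for all $u$ of sort $n$, $c(u)\in G$ if and only if $u\in F$, where $c\colon n\to n+1$ is the associated cylindrification.
   Context: The Boolean prime ideal theorem is assumed. Signature. There is a sort $n$ for each $n\ge0$. For every function $\alpha\colon\{1,\dots,n\}\to\{1,\dots,k\}$ there is a unary function symbol (''substitution'') $\alpha\colon n\to k$ (argument of sort $n$, value of sort $k$). Each sort has $0,1,\vee,\wedge$; for each $n$ there is $\exists\colon n+1\to n$ (positive existential signature). The associated cylindrification of $\exists\colon n+1\to n$ is the substitution $c\colon n\to n+1$ given by $c(i)=i$. Axioms: (1) each sort is a bounded distributive lattice under $0,1,\vee,\wedge$; (2) substitutions preserve $0,1,\vee,\wedge$; (7) $\exists(0)=0$ and $\exists(r\vee s)=\exists(r)\vee\exists(s)$; (9) $\exists(r\wedge c(s))=\exists(r)\wedge s$ for all $r$ of sort $n+1$, $s$ of sort $n$. A prime filter is a proper, nonempty, upward-closed, $\wedge$-closed subset of a sort with $x\vee y\in F\Rightarrow x\in F$ or $y\in F$. *)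

(* Defs.v *)
From mathcomp Require Import all_boot.
Set Implicit Arguments. Unset Strict Implicit. Unset Printing Implicit Defensive.

(* Sorts are indexed by n : nat; the index set {1,...,n} is rendered as 'I_n
   (0-based), so a substitution alpha : n -> k is a function 'I_n -> 'I_k. *)
Record PosExSig := {
  car  : nat -> Type;
  zero : forall n, car n;
  one  : forall n, car n;
  join : forall n, car n -> car n -> car n;
  meet : forall n, car n -> car n -> car n;
  subst : forall n k, ('I_n -> 'I_k) -> car n -> car k;
  ex   : forall n, car n.+1 -> car n
}.

Arguments zero {A} n : rename.
Arguments one {A} n : rename.
Arguments join {A n} : rename.
Arguments meet {A n} : rename.
Arguments subst {A n k} : rename.
Arguments ex {A n} : rename.

Definition cyl (n : nat) : 'I_n -> 'I_n.+1 := widen_ord (leqnSn n).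
Arguments cyl n _ : clear implicits.

Section Laws.
Variable A : PosExSig.

Definition bdl_axiom : Prop := forall n : nat,
  (forall x y z : car A n, join x (join y z) = join (join x y) z) /\
  (forall x y z : car A n, meet x (meet y z) = meet (meet x y) z) /\
  (forall x y : car A n, join x y = join y x) /\
  (forall x y : car A n, meet x y = meet y x) /\
  (forall x y : car A n, join x (meet x y) = x) /\
  (forall x y : car A n, meet x (join x y) = x) /\
  (forall x y z : car A n, meet x (join y z) = join (meet x y) (meet x z)) /\
  (forall x : car A n, join x (zero n) = x) /\
  (forall x : car A n, meet x (one n) = x).

Definition subst_axiom : Prop := forall n k (a : 'I_n -> 'I_k),
  subst a (zero (A:=A) n) = zero k /\ subst a (one (A:=A) n) = one k /\
  (forall x y : car A n, subst a (join x y) = join (subst a x) (subst a y)) /\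
  (forall x y : car A n, subst a (meet x y) = meet (subst a x) (subst a y)).

Definition ex_join_axiom : Prop := forall n,
  ex (zero (A:=A) n.+1) = zero n /\
  (forall r s : car A n.+1, ex (join r s) = join (ex r) (ex s)).

Definition frobenius_axiom : Prop := forall n (r : car A n.+1) (s : car A n),
  ex (meet r (subst (cyl n) s)) = meet (ex r) s.

Definition le n (x y : car A n) : Prop := meet x y = x.

Definition prime_filter n (F : car A n -> Prop) : Prop :=
  (exists x, ~ F x) /\
  (exists x, F x) /\
  (forall x y, le x y -> F x -> F y) /\
  (forall x y, F x -> F y -> F (meet x y)) /\
  (forall x y, F (join x y) -> F x \/ F y).

End Laws.

(* Main.v *)
Require Import Defs.
From mathcomp Require Import all_boot.
From mathcomp Require boolp classical_sets.
From Stdlib Require Import Classical.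
Set Implicit Arguments. Unset Strict Implicit.

Lemma meetxx (A : PosExSig) (H1 : bdl_axiom A) n (x : car A n) : meet x x = x.
Proof.
have [_ [_ [_ [_ [ab1 [ab2 _]]]]]] := H1 n.
by rewrite -{2}(ab1 x x) ab2.
Qed.

Lemma le_refl' (A : PosExSig) (H1 : bdl_axiom A) n (x : car A n) : le x x.
Proof. exact: meetxx. Qed.

Lemma le_trans' (A : PosExSig) (H1 : bdl_axiom A) n (x y z : car A n) :
  le x y -> le y z -> le x z.
Proof.
have [_ [ma _]] := H1 n.
rewrite /le => h1 h2; by rewrite -h1 -ma h2.
Qed.

Lemma le_meetl (A : PosExSig) (H1 : bdl_axiom A) n (x y : car A n) : le (meet x y) x.
Proof.
have [_ [ma [_ [mc _]]]] := H1 n.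
by rewrite /le mc ma meetxx.
Qed.

Lemma le_meetr (A : PosExSig) (H1 : bdl_axiom A) n (x y : car A n) : le (meet x y) y.
Proof.
have [_ [ma [_ [mc _]]]] := H1 n.
by rewrite /le -ma meetxx.
Qed.

Lemma le_glb (A : PosExSig) (H1 : bdl_axiom A) n (x y z : car A n) :
  le z x -> le z y -> le z (meet x y).
Proof.
have [_ [ma _]] := H1 n.
by rewrite /le => h1 h2; rewrite ma h1 h2.
Qed.

Lemma le_joinl (A : PosExSig) (H1 : bdl_axiom A) n (x y : car A n) : le x (join x y).
Proof. have [_ [_ [_ [_ [_ [ab2 _]]]]]] := H1 n; exact: ab2. Qed.

Lemma le_joinr (A : PosExSig) (H1 : bdl_axiom A) n (x y : car A n) : le y (join x y).
Proof. have [_ [_ [jc _]]] := H1 n; rewrite jc; exact: le_joinl. Qed.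

Lemma le_lub (A : PosExSig) (H1 : bdl_axiom A) n (x y z : car A n) :
  le x z -> le y z -> le (join x y) z.
Proof.
have [_ [_ [_ [mc [_ [_ [d _]]]]]]] := H1 n.
by rewrite /le => h1 h2; rewrite mc d (mc z x) (mc z y) h1 h2.
Qed.

Lemma le_join_eq (A : PosExSig) (H1 : bdl_axiom A) n (x y : car A n) :
  le x y -> join x y = y.
Proof.
have [_ [_ [jc [mc [ab1 _]]]]] := H1 n.
by rewrite /le => h; rewrite -h jc mc ab1.
Qed.

Lemma le_zero (A : PosExSig) (H1 : bdl_axiom A) n (x : car A n) : le (zero n) x.
Proof.
have [_ [_ [jc [_ [_ [ab2 [_ [j0 _]]]]]]]] := H1 n.
by rewrite /le -{1}(j0 x) jc ab2.
Qed.

Lemma meet1x (A : PosExSig) (H1 : bdl_axiom A) n (x : car A n) : meet (Defs.one n) x = x.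
Proof.
have [_ [_ [_ [mc [_ [_ [_ [_ m1]]]]]]]] := H1 n.
by rewrite mc m1.
Qed.

Lemma subst_le (A : PosExSig) (H2 : subst_axiom A) n k (a : 'I_n -> 'I_k) (x y : car A n) :
  le x y -> le (subst a x) (subst a y).
Proof. have [_ [_ [_ sm]]] := H2 n k a; by rewrite /le -sm => ->. Qed.

Lemma ex_le (A : PosExSig) (H1 : bdl_axiom A) (H7 : ex_join_axiom A) n (x y : car A n.+1) :
  le x y -> le (ex x) (ex y).
Proof.
move=> /(le_join_eq H1) h; have [_ ej] := H7 n.
rewrite -h ej; exact: le_joinl.
Qed.

Lemma ex_cyl (A : PosExSig) (H1 : bdl_axiom A) (H9 : frobenius_axiom A) n (v : car A n) :
  le (ex (subst (cyl n) v)) v.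
Proof.
rewrite -(meet1x H1 (subst (cyl n) v)) H9; exact: le_meetr.
Qed.

Theorem lemma4p11 (A : PosExSig)
  (H1 : bdl_axiom A) (H2 : subst_axiom A)
  (H7 : ex_join_axiom A) (H9 : frobenius_axiom A)
  (n : nat) (F : car A n -> Prop) (r : car A n.+1) :
  prime_filter F -> F (ex r) ->
  exists G : car A n.+1 -> Prop,
    prime_filter G /\ G r /\
    (forall u : car A n, G (subst (cyl n) u) <-> F u).
Proof.
move=> [[w nFw] [_ [Fup [Fmeet Fprime]]]] Fr.
set c := subst (cyl n).
have nF0 : ~ F (zero n) by move=> F0; apply: nFw; apply: Fup F0; exact: le_zero.
pose good (X : car A n.+1 -> Prop) :=
  (forall x y, le x y -> X x -> X y) /\ (forall x y, X x -> X y -> X (meet x y)) /\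
  (forall v, X (c v) -> F v) /\ X r /\ (forall u, F u -> X (c u)).
pose G0 x := exists u, F u /\ le (meet r (c u)) x.
have G0sub X : good X -> forall x, G0 x -> X x.
  move=> [up [mt [_ [Xr Xc]]]] x [u [Fu le1]].
  by apply: (up _ _ le1); apply: mt => //; apply: Xc.
have G0good : good G0.
  split; first by move=> x y lxy [u [Fu l]]; exists u; split => //; exact: (le_trans' H1 l lxy).
  split.
    move=> x y [u [Fu lu]] [v [Fv lv]]; exists (meet u v); split; first exact: Fmeet.
    have [_ [_ [_ sm]]] := H2 _ _ (cyl n).
    rewrite /c sm; apply: le_glb => //.
      apply: (le_trans' H1 _ lu); apply: le_glb => //; first exact: le_meetl.
      apply: (le_trans' H1 (le_meetr H1 _ _)); exact: le_meetl.
    apply: (le_trans' H1 _ lv); apply: le_glb => //; first exact: le_meetl.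
    apply: (le_trans' H1 (le_meetr H1 _ _)); exact: le_meetr.
  split.
    move=> v [u [Fu l]]; apply: (Fup (meet (ex r) u)); last exact: Fmeet.
    rewrite -H9; apply: (le_trans' H1 _ (ex_cyl H1 H9 v)); exact: ex_le.
  split.
    exists (ex r); split => //; exact: le_meetl.
  move=> u Fu; exists u; split => //; exact: le_meetr.
pose T := {X : car A n.+1 -> Prop | good X}.
pose R (X Y : T) := boolp.asbool (forall x, sval X x -> sval Y x).
have [M Mmax] : exists M, classical_sets.premaximal R M.
  apply: (@classical_sets.ZL_preorder T (exist _ G0 G0good) R).
  - by move=> X; apply/boolp.asboolP.
  - by move=> X Y Z /boolp.asboolP h1 /boolp.asboolP h2; apply/boolp.asboolP => x /h1 /h2.
  move=> C Ctot.
  pose B x := G0 x \/ exists X : T, C X /\ sval X x.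
  have Bup : forall x y, le x y -> B x -> B y.
    move=> x y l [h|[X [CX Xx]]]; first by left; apply: (proj1 G0good) h.
    right; exists X; split => //; exact: (proj1 (svalP X)) Xx.
  have Bgood : good B.
    split => //.
    have key : forall x y, B x -> B y -> (exists X : T, C X /\ sval X x /\ sval X y) \/ (G0 x /\ G0 y).
      move=> x y [hx|[X [CX Xx]]] [hy|[Y [CY Yy]]]; first by right.
      - left; exists Y; split => //; split => //; exact: G0sub (svalP Y) _ hx.
      - left; exists X; split => //; split => //; exact: G0sub (svalP X) _ hy.
      have [/boolp.asboolP h|/boolp.asboolP h] := Ctot X Y CX CY.
        by left; exists Y; split => //; split => //; apply: h.
      by left; exists X; split => //; split => //; apply: h.
    split.
      move=> x y Bx By; have [[X [CX [Xx Xy]]]|[hx hy]] := key x y Bx By.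
        by right; exists X; split => //; exact: (proj1 (proj2 (svalP X))).
      by left; exact: (proj1 (proj2 G0good)).
    split.
      move=> v [h|[X [CX Xx]]]; first exact: (proj1 (proj2 (proj2 G0good))).
      exact: (proj1 (proj2 (proj2 (svalP X)))).
    split; first by left; exact: (proj1 (proj2 (proj2 (proj2 G0good)))).
    by move=> u Fu; left; exact: (proj2 (proj2 (proj2 (proj2 G0good)))).
  exists (exist _ B Bgood) => X CX; apply/boolp.asboolP => x Xx /=.
  by right; exists X.
case: M Mmax => M gM Mmax; have [Mup [Mmeet [Mdis [Mr Mc]]]] := gM.
have MfromGood X : good X -> (forall x, M x -> X x) -> forall x, X x -> M x.
  move=> gX sub.
  by move/boolp.asboolP: (Mmax (exist _ X gX) (introT (boolp.asboolP _) sub)).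
pose Mx x z := exists m, M m /\ le (meet m x) z.
have Mext : forall x, (forall v, Mx x (c v) -> F v) -> M x.
  move=> x dis; apply: (MfromGood (Mx x)).
  - split.
      by move=> a b l [m [Mm lm]]; exists m; split => //; exact: (le_trans' H1 lm l).
    split.
      move=> a b [m1 [M1 l1]] [m2 [M2 l2]]; exists (meet m1 m2); split; first exact: Mmeet.
      apply: le_glb => //.
        apply: (le_trans' H1 _ l1); apply: le_glb => //; last exact: le_meetr.
        apply: (le_trans' H1 (le_meetl H1 _ _)); exact: le_meetl.
      apply: (le_trans' H1 _ l2); apply: le_glb => //; last exact: le_meetr.
      apply: (le_trans' H1 (le_meetl H1 _ _)); exact: le_meetr.
    split => //.
    split; first by exists r; split => //; exact: le_meetl.
    by move=> u Fu; exists (c u); split; [exact: Mc | exact: le_meetl].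
  - by move=> m Mm; exists m; split => //; exact: le_meetl.
  - by exists r; split => //; exact: le_meetr.
have [_ [_ [_ [_ [_ [_ [dist _]]]]]]] := H1 n.+1.
have [_ [_ [sj _]]] := H2 _ _ (cyl n).
exists M; split; last first.
  split => //; move=> u; split; [exact: Mdis | exact: Mc].
split; first by exists (c (zero n)) => /Mdis.
split; first by exists r.
split => //; split => //.
move=> x y Mxy; apply: NNPP => nxy.
have notM z : ~ M z -> exists v, Mx z (c v) /\ ~ F v.
  move=> nz; apply: NNPP => hh; apply: nz; apply: Mext => v h.
  by apply: NNPP => nF; apply: hh; exists v.
have [v1 [[m1 [M1 l1]] n1]] := notM x (fun h => nxy (or_introl h)).
have [v2 [[m2 [M2 l2]] n2]] := notM y (fun h => nxy (or_intror h)).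
have : F (join v1 v2).
  apply: Mdis; rewrite /c sj; apply: (Mup (meet (meet m1 m2) (join x y))); last first.
    by apply: (Mmeet _ _) => //; apply: (Mmeet _ _).
  rewrite dist; apply: le_lub => //.
    apply: (le_trans' H1 _ (le_joinl H1 _ _)); apply: (le_trans' H1 _ l1).
    apply: le_glb => //; last exact: le_meetr.
    apply: (le_trans' H1 (le_meetl H1 _ _)); exact: le_meetl.
  apply: (le_trans' H1 _ (le_joinr H1 _ _)); apply: (le_trans' H1 _ l2).
  apply: le_glb => //; last exact: le_meetr.
  apply: (le_trans' H1 (le_meetl H1 _ _)); exact: le_meetr.
by move/Fprime => [].
Qed.
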